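(* Let $\Psi\subset\hat G$, let $R_\Psi$ be the associated character group ring, and let $x\in R_\Psi$ be a non-zerodivisor. Then $\#R_\Psi/(x)=\#\mathcal{O}/\big(\prod_{\psi\in\Psi}\psi(x)\big)$.
   Context: $G$ is a finite abelian group, $p$ an odd prime, $\mathcal{O}$ a finite extension of $\mathbf{Z}_p$ containing all values of all characters $G\to\overline{\mathbf{Q}}_p^*$, and $\hat G$ the set of these characters. For $\Psi\subset\hat G$, the character group ring $R_\Psi$ is the image of $\mathcal{O}[G]\to\prod_{\psi\in\Psi}\mathcal{O}$, $x\mapsto(\psi(x))_{\psi}$, and $\psi(x)$ for $x\in R_\Psi$ denotes the $\psi$-coordinate. *)

(* Defs.v *)
From HB Require Import structures.
From mathcomp Require Import all_boot all_order all_algebra all_fingroup all_solvable.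
Set Implicit Arguments. Unset Strict Implicit. Unset Printing Implicit Defensive.
Import Order.TTheory GRing.Theory Num.Theory.
Local Open Scope ring_scope.

(* O is a "finite extension of Z_p": a complete discrete valuation ring of
   characteristic 0 whose residue field is finite of characteristic p. *)
Definition is_finite_ext_Zp (p : nat) (O : idomainType) : Prop :=
  (forall n : nat, (0 < n)%N -> n%:R != 0 :> O) /\
  exists pi : O,
    [/\ pi != 0 /\ pi \isn't a GRing.unit,
        (forall a : O, a != 0 -> exists n (u : O), u \is a GRing.unit /\ a = u * pi ^+ n),
        (exists c : O, p%:R = pi * c),
        (exists s : seq O, forall a : O, exists2 r, r \in s & exists c, a - r = pi * c) &
        (forall a : nat -> O,
            (forall n, exists c, a n.+1 - a n = pi ^+ n * c) ->
            exists l : O, forall n, exists c, l - a n = pi ^+ n * c)].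

Definition is_character (gT : finGroupType) (O : idomainType) (chi : gT -> O) : Prop :=
  chi 1%g = 1 /\ forall g h : gT, chi (g * h)%g = chi g * chi h.

(* The map O[G] -> prod_{psi in Psi} O, indexing Psi by 'I_(size Psi). *)
Definition char_eval (gT : finGroupType) (O : idomainType) (Psi : seq {ffun gT -> O})
  (f : {ffun gT -> O}) : {ffun 'I_(size Psi) -> O} :=
  [ffun i : 'I_(size Psi) => \sum_(g : gT) f g * (nth 0 Psi i) g].

Definition in_R_Psi (gT : finGroupType) (O : idomainType) (Psi : seq {ffun gT -> O})
  (v : {ffun 'I_(size Psi) -> O}) : Prop :=
  exists f : {ffun gT -> O}, char_eval Psi f = v.

Arguments in_R_Psi {gT O} Psi v.

Definition pmul (O : idomainType) (n : nat) (u v : {ffun 'I_n -> O}) : {ffun 'I_n -> O} :=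
  [ffun i => u i * v i].

(* The set S, modulo the equivalence eqv, has exactly n classes
   (i.e. the quotient S/eqv has cardinality n). *)
Definition num_classes (T : Type) (S : T -> Prop) (eqv : T -> T -> Prop) (n : nat) : Prop :=
  exists r : 'I_n -> T,
    [/\ forall i, S (r i),
        forall i j, eqv (r i) (r j) -> i = j &
        forall a, S a -> exists i, eqv a (r i)].

Definition R_Psi_cong (gT : finGroupType) (O : idomainType) (Psi : seq {ffun gT -> O})
  (x a b : {ffun 'I_(size Psi) -> O}) : Prop :=
  exists r, in_R_Psi Psi r /\ a - b = pmul x r.

Definition O_cong (O : idomainType) (c a b : O) : Prop := exists r : O, a - b = c * r.

(* Main.v *)
Require Import Defs.
From HB Require Import structures.
From mathcomp Require Import all_boot all_order all_algebra all_fingroup all_solvable.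
From mathcomp Require Import ring.
From Stdlib Require Import Classical.
Import Order.TTheory GRing.Theory Num.Theory.
Local Open Scope ring_scope.
Set Implicit Arguments. Unset Strict Implicit. Unset Printing Implicit Defensive.
Section Gen.
Variable T : Type.

Lemma ncl_ext (S S' : T -> Prop) (e e' : T -> T -> Prop) n :
  (forall a, S a <-> S' a) -> (forall a b, e a b <-> e' a b) ->
  num_classes S e n -> num_classes S' e' n.
Proof.
move=> HS He [r [Sr ir sr]]; exists r; split.
- by move=> i; apply/HS.
- by move=> i j /He; apply: ir.
- by move=> a /HS /sr [i /He Hi]; exists i.
Qed.

Lemma ncl_fin (I : finType) (S : T -> Prop) (e : T -> T -> Prop) (r : I -> T) :
  (forall i, S (r i)) -> (forall i j, e (r i) (r j) -> i = j) ->
  (forall a, S a -> exists i, e a (r i)) -> num_classes S e #|I|.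
Proof.
move=> Sr ir sr; exists (fun i => r (enum_val i)); split.
- by [].
- by move=> i j /ir /enum_val_inj.
- by move=> a /sr [i Hi]; exists (enum_rank i); rewrite enum_rankK.
Qed.

Variables (e : T -> T -> Prop) (esym : forall a b, e a b -> e b a)
  (etr : forall a b c, e a b -> e b c -> e a c).

Lemma ncl_uniq (S : T -> Prop) k m :
  num_classes S e k -> num_classes S e m -> k = m.
Proof.
suff H : forall k m, num_classes S e k -> num_classes S e m -> (k <= m)%N.
  by move=> A B; apply/eqP; rewrite eqn_leq !H.
move=> {}k {}m [r [Sr ir sr]] [r' [Sr' ir' sr']].
have /fin_all_exists [f Hf] : forall i : 'I_k, exists j, e (r i) (r' j).
  by move=> i; apply: sr'.
have finj : injective f.
  move=> i j fij; apply: ir; apply: etr (Hf i) _; rewrite fij; exact: esym (Hf j).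
by have := leq_card f finj; rewrite !card_ord.
Qed.
End Gen.

Section Dedup.
Variable T : eqType.
Variables (e : T -> T -> Prop) (esym : forall a b, e a b -> e b a)
  (etr : forall a b c, e a b -> e b c -> e a c).

Lemma ncl_dedup (s : seq T) (S : T -> Prop) :
  (forall a, S a -> exists2 t, t \in s & e a t) -> exists m, num_classes S e m.
Proof.
elim: s S => [|t s IH] S cov.
  have f : 'I_0 -> T by case=> ? H; exfalso; move: H; rewrite ltn0.
  exists 0%N, f; split; first by case=> ? H; exfalso; move: H; rewrite ltn0.
    by case=> ? H; exfalso; move: H; rewrite ltn0.
  by move=> a /cov [].
case: (classic (exists b, S b /\ e b t)) => [[b [Sb ebt]] | nob].
  have [m [r [Sr ir sr]]] : exists m, num_classes (fun a => S a /\ ~ e a t) e m.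
    apply: IH => a [Sa nat]; have [t' ] := cov a Sa.
    rewrite in_cons => /orP [/eqP -> //| t's] eat'; by exists t'.
  exists m.+1, (fun i => match unlift ord0 i with Some j => r j | None => b end).
  split.
  - by move=> i; case: unliftP => [j|] _ //; case: (Sr j).
  - move=> i j; case: (unliftP ord0 i) => [i' ->|->]; case: (unliftP ord0 j) => [j' ->|->] //.
    + by move/ir => ->.
    + by move=> H; case: (Sr i').2; apply: etr H ebt.
    + by move=> H; case: (Sr j').2; apply: etr (esym H) ebt.
  - move=> a Sa; case: (classic (e a t)) => [eat|neat].
      by exists ord0; rewrite unlift_none; apply: etr eat (esym ebt).
    have [j Hj] := sr a (conj Sa neat); exists (lift ord0 j); by rewrite liftK.
apply: IH => a Sa; have [t'] := cov a Sa.
rewrite in_cons => /orP [/eqP -> eat| t's eat']; last by exists t'.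
by case: nob; exists a.
Qed.

Lemma ncl_restrict (A B : T -> Prop) (e0 : T -> T -> Prop) N :
  (forall a, B a -> A a) -> (forall a b, e0 a b -> e a b) ->
  num_classes A e0 N -> exists m, num_classes B e m.
Proof.
move=> BA ee [r [Ar ir sr]]; apply: (ncl_dedup (s := [seq r i | i <- enum 'I_N])).
move=> a /BA /sr [i Hi]; exists (r i); last exact: ee.
by rewrite map_f ?mem_enum.
Qed.
End Dedup.

Section Grp.
Variable V : zmodType.
Definition subg (A : V -> Prop) := A 0 /\ forall a b, A a -> A b -> A (a - b).
Definition cong (B : V -> Prop) (a b : V) := B (a - b).

Lemma subgN A : subg A -> forall a, A a -> A (- a).
Proof. by move=> [A0 AB] a Aa; rewrite -sub0r; apply: AB. Qed.
Lemma subgD A : subg A -> forall a b, A a -> A b -> A (a + b).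
Proof. by move=> hA a b Aa Ab; rewrite -[b]opprK; apply: hA.2 => //; apply: subgN. Qed.

Lemma cong_sym B : subg B -> forall a b, cong B a b -> cong B b a.
Proof. by move=> hB a b H; rewrite /cong -opprB; apply: subgN. Qed.
Lemma cong_tr B : subg B -> forall a b c, cong B a b -> cong B b c -> cong B a c.
Proof.
move=> hB a b c H1 H2; rewrite /cong.
have -> : a - c = (a - b) + (b - c) by rewrite addrA subrK.
exact: subgD.
Qed.

Lemma ncl_tower (A B C : V -> Prop) k m : subg B -> subg C ->
  (forall a, C a -> B a) -> (forall a b, A a -> B b -> A (a + b)) ->
  num_classes A (cong B) k -> num_classes B (cong C) m ->
  num_classes A (cong C) (k * m).
Proof.
move=> hB hC CB AB [r [Ar ir sr]] [s [Bs is_ ss]].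
have -> : (k * m)%N = #|{: 'I_k * 'I_m}| by rewrite card_prod !card_ord.
apply: (ncl_fin (r := fun ij => r ij.1 + s ij.2)).
- by move=> [i j]; apply: AB.
- move=> [i j] [i' j'] /= H.
  have Hb : B (r i - r i').
    have -> : r i - r i' = (r i + s j - (r i' + s j')) - (s j - s j').
      by rewrite opprD addrACA addrK.
    apply: hB.2; first exact: CB.
    by apply: hB.2.
  have ii' := ir _ _ Hb; subst i'.
  have : cong C (s j) (s j').
    by move: H; rewrite /cong opprD addrACA subrr add0r.
  by move/is_ => ->.
- move=> a Aa; have [i Hi] := sr a Aa; have [j Hj] := ss _ Hi.
  by exists (i, j); rewrite /cong /= opprD addrA.
Qed.

End Grp.
Section Img.
Variables V W : zmodType.
Definition img (f : V -> W) (A : V -> Prop) (w : W) := exists a, A a /\ w = f a.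

Lemma subg_img f A : (forall a b, f (a - b) = f a - f b) -> subg A -> subg (img f A).
Proof.
move=> fB [A0 AB]; split.
  by exists 0; split => //; have := fB 0 0; rewrite subrr => ->; rewrite subrr.
by move=> _ _ [a [Aa ->]] [b [Bb ->]]; exists (a - b); split; [apply: AB | rewrite fB].
Qed.

Lemma ncl_iso (f : V -> W) A B k : (forall a b, f (a - b) = f a - f b) -> injective f ->
  num_classes A (cong B) k -> num_classes (img f A) (cong (img f B)) k.
Proof.
move=> fB finj [r [Ar ir sr]]; exists (fun i => f (r i)); split.
- by move=> i; exists (r i).
- move=> i j [b [Bb]]; rewrite -fB => /finj Hb; apply: ir; by rewrite /cong Hb.
- move=> _ [a [Aa ->]]; have [i Hi] := sr a Aa; exists i.
  by exists (a - r i); rewrite fB.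
Qed.
End Img.

Section OSide.
Variable O : idomainType.
Definition cO (c : O) (v : O) := exists r, v = c * r.
Definition TT (v : O) := True.

Lemma subg_cO c : subg (cO c).
Proof.
split; first by exists 0; rewrite mulr0.
by move=> _ _ [a ->] [b ->]; exists (a - b); rewrite mulrBr.
Qed.

Lemma O_unit1 : num_classes TT (cong (cO 1)) 1.
Proof.
exists (fun _ => 0); split => //.
- by move=> i j _; rewrite !ord1.
- by move=> a _; exists ord0; exists (a - 0); rewrite mul1r.
Qed.

Lemma O_mul a b k m : a != 0 -> num_classes TT (cong (cO a)) k ->
  num_classes TT (cong (cO b)) m -> num_classes TT (cong (cO (a * b))) (k * m).
Proof.
move=> a0 Hk Hm; apply: ncl_tower (subg_cO _) (subg_cO _) _ _ Hk _ => //.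
  by move=> _ [r ->]; exists (b * r); rewrite mulrA.
have := ncl_iso (f := fun r => a * r) (fun u v => mulrBr a u v) (mulfI a0) Hm.
apply: ncl_ext.
  move=> v; split; first by move=> [r [_ ->]]; exists r.
  by move=> [r ->]; exists r.
move=> u v; rewrite /cong; split.
  by move=> [w [[r ->] ->]]; exists r; rewrite mulrA.
by move=> [r ->]; exists (b * r); split; [exists r | rewrite mulrA].
Qed.

Lemma O_fin p : is_finite_ext_Zp p O -> forall c, c != 0 ->
  exists N, num_classes TT (cong (cO c)) N.
Proof.
move=> [_ [pi [[pi0 _] fact _ [s Hs] _]]] c c0.
have [N1 H1] : exists N, num_classes TT (cong (cO pi)) N.
  apply: (ncl_dedup (cong_sym (subg_cO pi)) (cong_tr (subg_cO pi)) (s := s)).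
  by move=> a _; have [r rs [d Hd]] := Hs a; exists r => //; exists d.
have Hpow : forall e, exists N, num_classes TT (cong (cO (pi ^+ e))) N.
  elim=> [|e [N HN]]; first by exists 1%N; rewrite expr0; exact: O_unit1.
  exists (N * N1)%N; rewrite exprSr; apply: O_mul => //.
  by rewrite expf_neq0.
have [e [u [uU ->]]] := fact c c0.
have [N HN] := Hpow e; exists N; move: HN; apply: ncl_ext => // x y.
rewrite /cong; split.
  by move=> [r ->]; exists (u^-1 * r); rewrite mulrAC mulVKr // mulrC.
by move=> [r ->]; exists (u * r); rewrite mulrCA mulrA.
Qed.
End OSide.

Section Vec.
Variables (O : idomainType) (n : nat).
Notation V := {ffun 'I_n -> O}.
Definition TV (v : V) := True.

Lemma pmulB (x u v : V) : pmul x (u - v) = pmul x u - pmul x v.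
Proof. by apply/ffunP => i; rewrite !ffunE mulrBr. Qed.

Lemma pmul_inj (x : V) : (forall i, x i != 0) -> injective (pmul x).
Proof.
move=> hx u v /ffunP H; apply/ffunP => i; have := H i; rewrite !ffunE.
exact: mulfI.
Qed.

Lemma card_dffun (N : 'I_n -> nat) :
  #|{: {dffun forall i : 'I_n, 'I_(N i)}}| = (\prod_(i < n) N i)%N.
Proof.
rewrite card_dep_ffun foldrE big_map big_enum /=.
by apply: eq_bigr => i _; rewrite card_ord.
Qed.

Lemma prod_idx (x : V) (N : 'I_n -> nat) :
  (forall i, num_classes (@TT O) (cong (cO (x i))) (N i)) ->
  num_classes TV (cong (img (pmul x) TV)) (\prod_(i < n) N i)%N.
Proof.
move=> HN; have [R HR] := fin_all_exists HN.
rewrite -card_dffun.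
apply: (ncl_fin (r := fun phi : {dffun forall i : 'I_n, 'I_(N i)} =>
                       [ffun i => R i (phi i)])) => //.
- move=> phi phi' [u [_ Hu]]; apply/ffunP => i.
  have [_ ir _] := HR i; apply: ir; exists (u i).
  by have /ffunP := Hu => /(_ i); rewrite !ffunE.
- move=> a _.
  have /fin_all_exists [phi0 Hphi] : forall i, exists j : 'I_(N i), cong (cO (x i)) (a i) (R i j).
    by move=> i; have [_ _ sr] := HR i; apply: sr.
  have /fin_all_exists [rr Hrr] : forall i, exists r, a i - R i (phi0 i) = x i * r.
    by move=> i; have [r Hr] := Hphi i; exists r.
  exists (finfun phi0 : {dffun forall i : 'I_n, 'I_(N i)}).
  exists [ffun i => rr i]; split => //; apply/ffunP => i.
  by rewrite !ffunE Hrr.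
Qed.
End Vec.

Lemma O_prod_seq (O : idomainType) (I : Type) (x : I -> O) (N : I -> nat) :
  (forall i, x i != 0) -> (forall i, num_classes (@TT O) (cong (cO (x i))) (N i)) ->
  forall s : seq I, num_classes (@TT O) (cong (cO (\prod_(i <- s) x i))) (\prod_(i <- s) N i)%N.
Proof.
move=> hx HN; elim=> [|t s IH]; first by rewrite !big_nil; exact: O_unit1.
by rewrite !big_cons; apply: O_mul.
Qed.

Section Char.
Variables (O : idomainType) (gT : finGroupType) (Psi : seq {ffun gT -> O}).
Hypothesis Hch : forall psi, psi \in Psi -> is_character psi.
Hypothesis uPsi : uniq Psi.

Lemma chi_inv (psi : gT -> O) : is_character psi -> forall g, psi (g^-1)%g * psi g = 1.
Proof. by move=> [H1 HM] g; rewrite -HM mulVg. Qed.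

Lemma ch_char (i : 'I_(size Psi)) : is_character (nth 0 Psi i).
Proof. by apply: Hch; rewrite mem_nth. Qed.

Lemma orth (i j : 'I_(size Psi)) :
  \sum_(g : gT) nth 0 Psi i (g^-1)%g * nth 0 Psi j g = if i == j then #|gT|%:R else 0.
Proof.
case: eqP => [<-|ij].
  rewrite (eq_bigr (fun _ => 1)); last by move=> g _; apply: chi_inv; apply: ch_char.
  by rewrite sumr_const.
set chi := fun g => nth 0 Psi i (g^-1)%g * nth 0 Psi j g.
have [h Hh] : exists h, nth 0 Psi i h != nth 0 Psi j h.
  case: (pickP (fun h => nth 0 Psi i h != nth 0 Psi j h)) => [h Hh|H]; first by exists h.
  exfalso; apply: ij; apply: val_inj; apply/eqP.
  rewrite -(nth_uniq 0 (ltn_ord i) (ltn_ord j) uPsi); apply/eqP/ffunP => g.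
  by have := H g => /= /negbFE/eqP.
have [i1 iM] := ch_char i; have [j1 jM] := ch_char j.
have chiM : forall g, chi (h * g)%g = chi h * chi g.
  by move=> g; rewrite /chi invMg iM jM; ring.
have chih : chi h != 1.
  apply: contra Hh => /eqP Hc; apply/eqP.
  have := congr1 (fun t => nth 0 Psi i h * t) Hc.
  rewrite /chi mulr1 mulrA => <-.
  have := chi_inv (ch_char i) (h^-1)%g; rewrite invgK => ->; by rewrite mul1r.
have HS : \sum_g chi g = chi h * \sum_g chi g.
  by rewrite {1}(reindex_inj (mulgI h)) mulr_sumr; apply: eq_bigr => g _; rewrite chiM.
have : (chi h - 1) * \sum_g chi g = 0 by rewrite mulrBl -HS mul1r subrr.
by move/eqP; rewrite mulf_eq0 subr_eq0 (negbTE chih) => /eqP.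
Qed.

Lemma L_full (u : {ffun 'I_(size Psi) -> O}) :
  in_R_Psi Psi [ffun j => #|gT|%:R * u j].
Proof.
exists [ffun g => \sum_(i < size Psi) u i * nth 0 Psi i (g^-1)%g].
apply/ffunP => j; rewrite !ffunE.
under eq_bigr do rewrite ffunE mulr_suml.
rewrite exchange_big /=.
rewrite (eq_bigr (fun i => u i * (if i == j then #|gT|%:R else 0))); last first.
  by move=> i _; rewrite -orth mulr_sumr; apply: eq_bigr => g _; rewrite mulrA.
rewrite (bigD1 j) // eqxx big1 => [|i /andP [_ /negbTE ->]].
  by rewrite -[LHS]/(u j * #|gT|%:R + 0) addr0 mulrC.
by rewrite mulr0.
Qed.

Lemma char_evalB f g : char_eval Psi (f - g) = char_eval Psi f - char_eval Psi g.
Proof.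
apply/ffunP => i; rewrite !ffunE -sumrB; apply: eq_bigr => k _.
by rewrite !ffunE mulrBl.
Qed.

Lemma L_sub : subg (in_R_Psi Psi).
Proof.
split.
  exists 0; apply/ffunP => i; rewrite !ffunE big1 // => g _; by rewrite ffunE mul0r.
by move=> _ _ [f <-] [g <-]; exists (f - g); rewrite char_evalB.
Qed.

Lemma L_mul a b : in_R_Psi Psi a -> in_R_Psi Psi b -> in_R_Psi Psi (pmul a b).
Proof.
move=> [f <-] [h <-].
exists [ffun k => \sum_(g : gT) f g * h ((g^-1) * k)%g].
apply/ffunP => i; rewrite !ffunE.
have [_ iM] := ch_char i.
under eq_bigr do rewrite ffunE mulr_suml.
rewrite exchange_big /= mulr_suml; apply: eq_bigr => g _.
rewrite (reindex_inj (mulgI g)) /= mulr_sumr; apply: eq_bigr => k _.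
rewrite mulKg iM; ring.
Qed.
End Char.

Theorem lemma2p5 (p : nat) (O : idomainType) (gT : finGroupType)
  (Psi : seq {ffun gT -> O}) (x : {ffun 'I_(size Psi) -> O}) :
  prime p -> odd p ->
  is_finite_ext_Zp p O ->
  abelian [set: gT] ->
  (exists z : O, (exponent [set: gT]).-primitive_root z) ->
  uniq Psi ->
  (forall psi, psi \in Psi -> is_character psi) ->
  in_R_Psi Psi x ->
  (forall y, in_R_Psi Psi y -> pmul x y = 0 -> y = 0) ->
  forall n : nat,
    num_classes (in_R_Psi Psi) (R_Psi_cong x) n <->
    num_classes (fun _ : O => True) (O_cong (\prod_(i < size Psi) x i)) n.
Proof.
move=> _ _ HO _ _ uPsi Hch Lx nzd m.
have c0 : #|gT|%:R != 0 :> O.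
  by apply: HO.1; apply/card_gt0P; exists 1%g.
have hx : forall i, x i != 0.
  move=> i; apply/eqP => xi0.
  pose d : {ffun 'I_(size Psi) -> O} := [ffun k => if k == i then 1 else 0].
  have Ly := L_full Hch uPsi d.
  have := nzd _ Ly.
  have -> : pmul x [ffun j => #|gT|%:R * d j] = 0.
    apply/ffunP => j; rewrite !ffunE; case: eqP => [->|_].
      by rewrite xi0 mul0r.
    by rewrite !mulr0.
  move=> /(_ erefl) /ffunP /(_ i); rewrite !ffunE eqxx mulr1 => /eqP.
  by rewrite (negbTE c0).
set L := in_R_Psi Psi.
have sL : subg L := L_sub Psi.
have sxL : subg (img (pmul x) L) := subg_img (@pmulB _ _ x) sL.
have sU : subg (@TV O (size Psi)) by [].
have sxU : subg (img (pmul x) (@TV O (size Psi))) := subg_img (@pmulB _ _ x) sU.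
have [N HN] := fin_all_exists (fun i => O_fin HO (hx i)).
have HUxU := prod_idx HN.
pose cvec : {ffun 'I_(size Psi) -> O} := [ffun _ => #|gT|%:R].
have cv0 : forall i, cvec i != 0 by move=> i; rewrite ffunE.
have [Nc HNc] := fin_all_exists (fun i => O_fin HO (cv0 i)).
have HUcU := prod_idx HNc.
have [k HUL] : exists k, num_classes (@TV O (size Psi)) (cong L) k.
  apply: (ncl_restrict (cong_sym sL) (cong_tr sL) _ _ HUcU) => // a b [u [_ Hu]].
  rewrite /cong Hu.
  have -> : pmul cvec u = [ffun j => #|gT|%:R * u j] by apply/ffunP => j; rewrite !ffunE.
  exact: L_full.
have HxUxL := ncl_iso (@pmulB _ _ x) (pmul_inj hx) HUL.
have xLxU : forall a, img (pmul x) L a -> img (pmul x) (@TV O (size Psi)) a.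
  by move=> _ [r [_ ->]]; exists r.
have H1 := ncl_tower sxU sxL xLxU (fun _ _ _ _ => I) HUxU HxUxL.
have [m0 HLxL] : exists m0, num_classes L (cong (img (pmul x) L)) m0.
  exact: (ncl_restrict (cong_sym sxL) (cong_tr sxL) (A := @TV O (size Psi)) _ _ H1).
have xLL : forall a, img (pmul x) L a -> L a.
  by move=> _ [r [Lr ->]]; apply: L_mul.
have H2 := ncl_tower sL sxL xLL (fun _ _ _ _ => I) HUL HLxL.
have E := ncl_uniq (cong_sym sxL) (cong_tr sxL) H1 H2.
have k0 : (0 < k)%N.
  by case: HUL => r [_ _ sr]; have [i _] := sr 0 I; apply: leq_ltn_trans (ltn_ord i).
have Em0 : m0 = (\prod_(i < size Psi) N i)%N.
  by apply/eqP; rewrite -(eqn_pmul2l k0) -E mulnC.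
have HOc := O_prod_seq hx HN (index_enum 'I_(size Psi)).
have sO := subg_cO (\prod_(i < size Psi) x i).
split => H.
  have := ncl_uniq (cong_sym sxL) (cong_tr sxL) H HLxL; rewrite Em0 => ->.
  exact: HOc.
have := ncl_uniq (cong_sym sO) (cong_tr sO) H HOc => ->.
by rewrite -Em0.
Qed.
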